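(* Let $\alpha\in[0,1)$, let $G\in\mathcal{G}_n^m$ with strong component $G^*$ and hanging trees $T^{(1)},\dots,T^{(m)}$ ($|\mathcal{V}(T^{(i)})|=n_i$), and let $G'$ be the digraph obtained from $G$ by replacing, for each $i$, the arcs of $T^{(i)}$ by the arcs $(v_i,u)$ for all $u\in\mathcal{V}(T^{(i)})\setminus\{v_i\}$ (so each $T^{(i)}$ becomes an out-star on the same vertex set centred at $v_i$). Then $\rho_\alpha(G')\ge\rho_\alpha(G)$.
   Context: All digraphs are finite, without loops or multiple arcs. $A(G)$ is the adjacency matrix, $D^+(G)$ the diagonal matrix of outdegrees, $A_\alpha(G)=\alpha D^+(G)+(1-\alpha)A(G)$, and $\rho_\alpha(G)$ is the spectral radius (largest modulus of an eigenvalue) of $A_\alpha(G)$. A directed tree is a digraph whose underlying graph is a tree (a single vertex allowed). The class $\mathcal{G}_n^m$ ($2\le m\le n$): $G\in\mathcal{G}_n^m$ consists of a strongly connected digraph $G^*$ on $m$ vertices $v_1,\dots,v_m$ together with directed trees $T^{(1)},\dots,T^{(m)}$, where $T^{(i)}$ has $n_i\ge1$ vertices including $v_i$, the sets $\mathcal{V}(T^{(i)})$ are pairwise disjoint, $\mathcal{V}(T^{(i)})\cap\mathcal{V}(G^* )=\{v_i\}$, $n=\sum_i n_i$, and the arcs of $G$ are those of $G^*$ and of the $T^{(i)}$. The vertices of $G^*$ are labeled so that $d_{G^*}^+(v_1)\ge d_{G^*}^+(v_2)\ge\cdots\ge d_{G^*}^+(v_m)$. *)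

(* Defs.v *)
From HB Require Import structures.
From mathcomp Require Import all_boot all_order all_algebra.
From mathcomp Require Import reals.
From mathcomp Require Import complex.
Set Implicit Arguments. Unset Strict Implicit. Unset Printing Implicit Defensive.
Import Order.TTheory GRing.Theory Num.Theory.
Local Open Scope ring_scope.

(* Loops are excluded by a separate [irreflexive G] hypothesis; multiple
   arcs cannot occur in this representation. *)

Definition outdeg n (G : rel 'I_n) (u : 'I_n) : nat := #|[set w | G u w]|.

Definition adjmx (R : nzRingType) n (G : rel 'I_n) : 'M[R]_n :=
  \matrix_(i, j) (G i j)%:R.
Definition outdegmx (R : nzRingType) n (G : rel 'I_n) : 'M[R]_n :=
  \matrix_(i, j) ((i == j)%:R * (outdeg G i)%:R).
Definition Aalpha (R : nzRingType) n (alpha : R) (G : rel 'I_n) : 'M[R]_n :=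
  alpha *: outdegmx R G + (1 - alpha) *: adjmx R G.

(* Spectral radius of a real square matrix: the largest modulus of a complex
   eigenvalue, i.e. of a root of the characteristic polynomial in R[i]. *)
Definition eigenvalues_seq (R : rcfType) n (A : 'M[R]_n) : seq R[i] :=
  sval (closed_field_poly_normal
          (char_poly (map_mx (fun x : R => x%:C%C) A))).

Definition spectral_radius (R : rcfType) n (A : 'M[R]_n) : R :=
  \big[Num.max/0]_(z <- eigenvalues_seq A) ComplexField.Normc.normc z.

Definition rho_alpha (R : rcfType) n (alpha : R) (G : rel 'I_n) : R :=
  spectral_radius (Aalpha alpha G).

(* The strong component G^* is described by its vertex set
   S = {v_1,...,v_m}; [root] sends every vertex to the vertex v_i of G^* whose
   hanging tree T^(i) contains it, so V(T^(i)) = root^-1(v_i). *)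
Definition tree_class n (root : 'I_n -> 'I_n) (v : 'I_n) : {set 'I_n} :=
  [set u | root u == v].

Definition und_in n (G : rel 'I_n) (X : {set 'I_n}) : rel 'I_n :=
  [rel x y | [&& x \in X, y \in X & G x y || G y x]].

Definition is_directed_tree_on n (G : rel 'I_n) (X : {set 'I_n}) : Prop :=
  (forall x y, x \in X -> y \in X -> connect (und_in G X) x y) /\
  #|[set p : 'I_n * 'I_n | [&& p.1 \in X, p.2 \in X & G p.1 p.2]]| = (#|X| - 1)%N.

Definition strongly_connected_on n (G : rel 'I_n) (S : {set 'I_n}) : Prop :=
  forall x y, x \in S -> y \in S ->
    connect [rel a b | [&& a \in S, b \in S & G a b]] x y.

Definition in_Gnm n (m : nat) (G : rel 'I_n) (S : {set 'I_n})
    (root : 'I_n -> 'I_n) : Prop :=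
  [/\ (2 <= m <= n)%N, #|S| = m,
      (forall u, root u \in S) /\ (forall v, v \in S -> root v = v),
      strongly_connected_on G S &
      (forall v, v \in S -> is_directed_tree_on G (tree_class root v)) /\
      (forall u w, G u w -> (u \in S /\ w \in S) \/ root u = root w)].

(* G': keep the arcs of G^*, and replace each T^(i) by the out-star centred at
   v_i on the same vertex set: arcs (v_i, u), u in V(T^(i)) \ {v_i}. *)
Definition star_digraph n (G : rel 'I_n) (S : {set 'I_n})
    (root : 'I_n -> 'I_n) : rel 'I_n :=
  [rel u w | [&& u \in S, w \in S & G u w] || (w \notin S) && (u == root w)].

(* Main.v *)
Require Import Defs.
From HB Require Import structures.
From mathcomp Require Import all_boot all_order all_algebra.
From mathcomp Require Import reals.
From mathcomp Require Import complex.
Import Order.TTheory GRing.Theory Num.Theory.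
Local Open Scope ring_scope.
From mathcomp Require Import ring lra zify.

Local Notation nc := (@ComplexField.Normc.normc _).

Section GraphPart.
Local Close Scope ring_scope.
Lemma CL n (H : rel 'I_n) (X : {set 'I_n}) :
  (forall x y, x \in X -> y \in X -> connect (und_in H X) x y) ->
  (#|X| - 1 <= #|[set p : 'I_n * 'I_n | [&& p.1 \in X, p.2 \in X & H p.1 p.2]]|)%N.
Proof.
move=> conn.
case: (set_0Vmem X) => [-> | [r rX]]; first by rewrite cards0.
set e := und_in H X.
pose P x k := [exists p : k.-tuple 'I_n, path e x p && (last x p == r)].
pose d x := find (P x) (iota 0 n).
have ex x : x \in X -> exists2 k, (k < n)%N & P x k.
  move=> xX; have /connectP [p pp lp] := conn x r xX rX.
  move: lp; case: (shortenP pp) => p' pp' up' _ lp'.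
  exists (size p').
    have := max_card (mem (x :: p')); rewrite card_ord (card_uniqP up') /=.
    by [].
  apply/existsP; exists (in_tuple p'); by rewrite /= pp' -lp' eqxx.
have dP x : x \in X -> P x (d x) /\ (forall k, P x k -> (d x <= k)%N).
  move=> xX; have [k kn Pk] := ex x xX.
  have hs : has (P x) (iota 0 n) by apply/hasP; exists k => //; rewrite mem_iota.
  split.
    have := nth_find 0 hs; rewrite nth_iota; first by move=> h; exact: h.
    by have := hs; rewrite has_find size_iota.
  move=> k' Pk'; rewrite leqNgt; apply/negP => lt.
  have k'n : (k' < n)%N.
    by apply: leq_trans lt _; have := find_size (P x) (iota 0 n); rewrite size_iota.
  by have := before_find 0 lt; rewrite nth_iota // add0n Pk'.
have par x : x \in X -> x != r -> exists y, e x y && (d y < d x)%N.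
  move=> xX xr; have [/existsP [p /andP [pp /eqP lp]] dmin] := dP x xX.
  case: p pp lp => [[|y p'] szp] //=.
    by move=> _ lp; move: xr; rewrite lp eqxx.
  move=> /andP [exy pp'] lp; exists y; rewrite exy /=.
  have yX : y \in X by move: exy; rewrite /e /und_in /= => /and3P [].
  have Py : P y (size p') by apply/existsP; exists (in_tuple p'); rewrite /= pp' lp eqxx.
  have := (dP y yX).2 _ Py; move: szp => /eqP <-; by [].
pose pa x := [pick y | e x y && (d y < d x)%N].
pose g x := if pa x is Some y then (if H x y then (x, y) else (y, x)) else (x, x).
set arcs := [set p : 'I_n * 'I_n | _].
have gP x : x \in X :\ r -> exists y, [/\ e x y, (d y < d x)%N &
    g x = if H x y then (x, y) else (y, x)].
  rewrite in_setD1 => /andP [xr xX]; rewrite /g /pa.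
  case: pickP => [y /andP [exy dy]|none]; first by exists y.
  by have [y /andP [exy dy]] := par x xX xr; have := none y; rewrite exy dy.
have sub : g @: (X :\ r) \subset arcs.
  apply/subsetP => _ /imsetP [x xX ->]; have [y [exy _ ->]] := gP x xX.
  move: exy; rewrite /e /und_in /= => /and3P [xX' yX hxy].
  rewrite inE; case: ifP => /= hh; rewrite ?xX' ?yX ?hh //.
  by move: hxy; rewrite hh.
have inj : {in X :\ r &, injective g}.
  move=> x1 x2 h1 h2; have [y1 [_ d1 ->]] := gP x1 h1; have [y2 [_ d2 ->]] := gP x2 h2.
  case: ifP => _; case: ifP => _ [] e1 e2 //; subst.
    by have := ltn_trans d1 d2; rewrite ltnn.
  by have := ltn_trans d1 d2; rewrite ltnn.
have := subset_leq_card sub; rewrite card_in_imset //.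
by rewrite (cardsD1 r X) rX add1n subn1.
Qed.

Lemma NC n m (G : rel 'I_n) S root : irreflexive G -> in_Gnm m G S root ->
  forall u a, u \notin S -> G a u -> connect G u a -> False.
Proof.
move=> irr [_ _ [rS rfix] _ [trees arcsG]] u a uS au ua.
set v := root u; have vS : v \in S := rS u.
set X := tree_class root v.
have inX y : (y \in X) = (root y == v) by rewrite inE.
have Sroot y : y \in S -> y \in X -> y = v.
  by move=> yS; rewrite inX rfix // => /eqP.
have ra : root a = v.
  by case: (arcsG a u au) => [[_ uS']|//]; move: uS; rewrite uS'.
have uX : u \in X by rewrite inX.
have aX : a \in X by rewrite inX ra.
pose GX := [rel y z | [&& y \in X, z \in X & G y z]].
pose pi y := if y \in X then y else v.
have step y z : G y z -> connect GX (pi y) (pi z).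
  move=> gyz; rewrite /pi; case yX: (y \in X); case zX: (z \in X).
  - by apply: connect1; rewrite /= yX zX gyz.
  - case: (arcsG y z gyz) => [[yS zS]|ryz]; first by rewrite (Sroot y yS yX) connect0.
    by move: zX; rewrite inX -ryz -inX yX.
  - case: (arcsG y z gyz) => [[yS zS]|ryz]; first by rewrite (Sroot z zS zX) connect0.
    by move: yX; rewrite inX ryz -inX zX.
  - exact: connect0.
have cGX : connect GX u a.
  move/connectP: ua => [p pp ea].
  have : forall y, path G y p -> connect GX (pi y) (pi (last y p)).
    clear ea; elim: p {pp} => [|z p IH] y /=; first by move=> _; exact: connect0.
    by move=> /andP [gyz pz]; apply: connect_trans (step _ _ gyz) (IH _ pz).
  by move=> /(_ u pp); rewrite /pi uX -ea aX.
move/connectP: cGX => [p pp ea]; move: ea; case: (shortenP pp) => {pp}p pp up _ ea.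
pose G' := [rel y z | G y z && ((y, z) != (a, u))].
have symU : symmetric (und_in G' X).
  by move=> y z; rewrite /und_in /= andbCA orbC.
have cua : connect (und_in G' X) u a.
  have gen : forall y q, path GX y q -> u \notin q -> y \in X ->
      connect (und_in G' X) y (last y q).
    move=> y q; elim: q y => [|z q IH] y /=; first by move=> *; exact: connect0.
    move=> /andP [/and3P [yX zX gyz] pz]; rewrite inE negb_or => /andP [uz up'] _.
    apply: connect_trans (IH z pz _ zX) => //.
    apply: connect1; rewrite /und_in /= yX zX /= gyz /=.
    by apply/orP; left; apply: contra uz => /eqP [_ ->].
  rewrite ea; apply: gen => //; by move: up; rewrite /= => /andP [].
have cau : connect (und_in G' X) a u by rewrite (sym_connect_sym symU).
have [tconn tcount] := trees v vS.
have conn' : forall x y, x \in X -> y \in X -> connect (und_in G' X) x y.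
  have sr : subrel (und_in G X) (connect (und_in G' X)).
    move=> y z; rewrite /und_in /= => /and3P [yX zX /orP [gyz|gzy]].
      case: (eqVneq (y, z) (a, u)) => [[-> ->] //|ne].
      by apply: connect1; rewrite /und_in /= yX zX gyz ne.
    case: (eqVneq (z, y) (a, u)) => [[-> ->] //|ne].
    by apply: connect1; rewrite /und_in /= yX zX gzy ne orbT.
  move=> x y xX yX; exact: connect_sub sr _ _ (tconn x y xX yX).
have := @CL n G' X conn'.
set arcs := [set p : 'I_n * 'I_n | [&& p.1 \in X, p.2 \in X & G p.1 p.2]] in tcount.
have -> : [set p : 'I_n * 'I_n | [&& p.1 \in X, p.2 \in X & G' p.1 p.2]] = arcs :\ (a, u).
  apply/setP => -[y z]; rewrite !inE /=.
  by case: (_ != _); rewrite ?andbT ?andbF.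
have auA : (a, u) \in arcs by rewrite inE /= aX uX au.
have := cardsD1 (a, u) arcs; rewrite auA tcount.
have : (2 <= #|X|)%N.
  have au' : a != u by apply: contraTneq au => ->; rewrite irr.
  have sub2 : [set a; u] \subset X.
    by rewrite subUset !sub1set aX uX.
  by have := subset_leq_card sub2; rewrite cards2 au'.
move=> h2 h3 h4; move: h2 h3 h4; rewrite /X add1n; move: #|tree_class root v| #|arcs :\ (a, u)| => t c; lia.
Qed.

End GraphPart.

Section Growth.
Variable R : realType.

Lemma bernoulli_le (s : R) k : 1 <= s -> 1 + k%:R * (s - 1) <= s ^+ k.
Proof.
move=> s1; elim: k => [|k IH]; first by rewrite mul0r addr0 expr0.
rewrite exprS -natr1.
have h0 : 0 <= (k%:R : R) by [].
have h1 : 0 <= (k%:R : R) * ((s - 1) * (s-1)) by apply: mulr_ge0 => //; nra.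
nra.
Qed.

Lemma lin_le_exp (s : R) : 1 < s -> exists E, 0 <= E /\ forall k, (k.+1)%:R <= E * s ^+ k.
Proof.
move=> s1; exists (1 + (s - 1)^-1).
have sp : 0 < s - 1 by lra.
have ip : 0 < (s - 1)^-1 by rewrite invr_gt0.
split; first lra.
move=> k; have := @bernoulli_le s k (ltW s1).
set t := s ^+ k => ht.
have : (1 + (s - 1)^-1) * (1 + k%:R * (s - 1)) <= (1 + (s - 1)^-1) * t.
  by apply: ler_wpM2l => //; lra.
have -> : (1 + (s - 1)^-1) * (1 + k%:R * (s - 1)) =
   1 + k%:R * (s - 1) + (s - 1)^-1 + k%:R.
  by field; rewrite lt0r_neq0.
have h0 : 0 <= (k%:R : R) * (s - 1) by apply: mulr_ge0 => //; lra.
rewrite -natr1; lra.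
Qed.

Lemma poly_le_exp d : forall (q : R), 1 < q ->
  exists D, 0 <= D /\ forall k, (k.+1%:R : R) ^+ d <= D * q ^+ k.
Proof.
elim: d => [|d IH] q q1.
  exists 1; split => // k; rewrite expr0 mul1r; apply: exprn_ege1; lra.
set s := Num.sqrt q.
have s1 : 1 < s by rewrite /s -sqrtr1 ltr_sqrt //; lra.
have [D [D0 HD]] := IH s s1.
have [E [E0 HE]] := @lin_le_exp s s1.
exists (D * E); split; first exact: mulr_ge0.
move=> k; rewrite exprSr.
have -> : q ^+ k = s ^+ k * s ^+ k.
  by rewrite -exprMn /s -expr2 sqr_sqrtr //; lra.
have a0 : 0 <= (k.+1%:R : R) ^+ d by apply: exprn_ge0.
have : (k.+1%:R : R) ^+ d * k.+1%:R <= (D * s ^+ k) * (E * s ^+ k).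
  by apply: ler_pM => //.
by rewrite mulrACA.
Qed.

End Growth.

Section MG.
Variable R : realType.

Lemma nc_real (x : R) : nc (x%:C)%C = `|x|.
Proof. by rewrite /ComplexField.Normc.normc /= expr0n /= addr0 sqrtr_sqr. Qed.

Lemma nc_ge0 (z : R[i]) : 0 <= nc z.
Proof. by case: z => a b; rewrite /ComplexField.Normc.normc sqrtr_ge0. Qed.

Lemma MG {n} {Bc : 'M[R[i]]_n.+1} {rho : R} {s : seq R[i]} : 0 < rho ->
  (forall mu, mu \in s -> nc mu <= rho) ->
  forall w : 'cV_n.+1, horner_mx Bc (\prod_(mu <- s) ('X - mu%:P)) *m w = 0 ->
  forall j, exists C0 : R, forall k,
    nc ((Bc ^+ k *m w) j 0) <= C0 * (k.+1%:R) ^+ size s * rho ^+ k.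
Proof.
move=> rho0; elim: s => [|mu s IH] Hs w Hw j.
  move: Hw; rewrite big_nil rmorph1 mul1mx => ->.
  by exists 0 => k; rewrite mulmx0 mxE ComplexField.Normc.normc0 !mul0r.
pose w' := (Bc - mu%:M) *m w.
have Hw' : horner_mx Bc (\prod_(mu <- s) ('X - mu%:P)) *m w' = 0.
  move: Hw; rewrite big_cons mulrC rmorphM /= rmorphB /= horner_mx_X horner_mx_C.
  by rewrite /w' mulmxA -mulmxE.
have [C1 HC1] := IH (fun m hm => Hs m (mem_behead (s := mu :: s) hm)) w' Hw' j.
have C10 : 0 <= C1.
  have := HC1 0%N; rewrite !expr0 mulr1 expr1n mulr1 => h.
  exact: le_trans (nc_ge0 _) h.
have mu_le : nc mu <= rho by apply: Hs; rewrite mem_head.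
pose e k := (Bc ^+ k *m w) j 0.
have rec k : e k.+1 = mu * e k + (Bc ^+ k *m w') j 0.
  rewrite /e exprSr -mulmxE -mulmxA.
  have -> : Bc *m w = w' + mu *: w.
    by rewrite /w' mulmxBl mul_scalar_mx addrNK.
  by rewrite mulmxDr -scalemxAr !mxE addrC.
pose D := nc (w j 0) + C1 / rho.
have D1 : C1 / rho <= D by rewrite /D lerDr nc_ge0.
have DC : C1 <= D * rho.
  by rewrite -(ler_pM2r rho0) in D1; rewrite mulfVK ?lt0r_neq0 in D1.
exists D => k; rewrite /= -/(e k); elim: k => [|k IHk].
  rewrite /e expr0 mul1mx !expr0 expr1n !mulr1 /D lerDl.
  by apply: divr_ge0 => //; apply: ltW.
rewrite rec.
apply: le_trans (le_normcD _ _) _.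
rewrite ComplexField.Normc.normcM.
have := HC1 k; set t := rho ^+ k; set a := (k.+1%:R : R).
set P := a ^+ size s => Hk.
have t0 : 0 < t by apply: exprn_gt0.
have a0 : 0 <= a by [].
have P0 : 0 <= P by apply: exprn_ge0.
have Q : P <= (a + 1) ^+ size s.
  by apply: (@lerXn2r _ (size s)); rewrite ?nnegrE //; lra.
move: IHk; rewrite -/t -/a /= exprS -/P => IHk.
rewrite exprS exprSr -natr1 -/a -/t.
have e0 := nc_ge0 (e k).
have h1 : nc mu * nc (e k) <= rho * (D * (a * P) * t).
  by apply: ler_pM; [exact: nc_ge0 | exact: e0 | exact: mu_le | exact: IHk].
set Q' := (a + 1) ^+ size s in Q *.
have D0 : 0 <= D by apply: le_trans D1; apply: divr_ge0 => //; apply: ltW.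
have h2 : D * ((a + 1) * P) * (t * rho) <= D * ((a + 1) * Q') * (t * rho).
  apply: ler_wpM2r; first by apply: mulr_ge0; apply: ltW.
  apply: ler_wpM2l => //; apply: ler_wpM2l => //; lra.
have h3 : C1 * P * t <= D * rho * P * t.
  by apply: ler_wpM2r; [apply: ltW | apply: ler_wpM2r].
have E : D * ((a + 1) * P) * (t * rho) = rho * (D * (a * P) * t) + D * rho * P * t by ring.
lra.
Qed.


Lemma bigmax_ge0 (s : seq R[i]) : 0 <= \big[Num.max/0]_(z <- s) nc z :> R.
Proof. elim: s => [|a s IH]; rewrite ?big_nil ?big_cons // le_max IH orbT //. Qed.

Lemma bigmax_ub (s : seq R[i]) z : z \in s -> nc z <= \big[Num.max/0]_(z <- s) nc z :> R.
Proof.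
elim: s => [|a s IH] //; rewrite inE big_cons le_max => /orP[/eqP->|/IH ->];
  by rewrite ?lexx ?orbT.
Qed.

Lemma bigmax_le (s : seq R[i]) c : 0 <= c -> (forall z, z \in s -> nc z <= c) ->
  \big[Num.max/0]_(z <- s) nc z <= c :> R.
Proof.
elim: s => [|a s IH] c0 H; rewrite ?big_nil ?big_cons // ge_max H ?mem_head //=.
by apply: IH => // z zs; apply: H; rewrite inE zs orbT.
Qed.

Lemma map_mxXn n (B : 'M[R]_n.+1) k :
  map_mx (fun x : R => (x%:C)%C) (B ^+ k) = (map_mx (fun x : R => (x%:C)%C) B) ^+ k.
Proof.
elim: k => [|k IH]; first by rewrite !expr0; apply: map_mx1.
by rewrite !exprS -!mulmxE map_mxM IH.
Qed.

Lemma sr_ge0 {n} (B : 'M[R]_n) : 0 <= spectral_radius B.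
Proof. exact: bigmax_ge0. Qed.

Lemma K n (B : 'M[R]_n.+1) (x : 'I_n.+1 -> R) (r : R) j0 :
  (forall i j, 0 <= B i j) -> (forall i, 0 <= x i) -> 0 < x j0 ->
  (forall u, r * x u <= \sum_w B u w * x w) -> r <= spectral_radius B.
Proof.
move=> B0 x0 xj0 Hr.
have rho0 := sr_ge0 B.
have [//|lt_rho_r] := lerP r (spectral_radius B).
move: rho0 lt_rho_r; rewrite /spectral_radius /eigenvalues_seq.
case: closed_field_poly_normal => s /= Hs.
set rho := \big[Num.max/0]_(z <- s) nc z => rho0 lt_rho_r.
pose rho' := (rho + r) / 2.
have rho'0 : 0 < rho' by rewrite /rho'; lra.
have rr' : rho' < r by rewrite /rho'; lra.
have Hs' : forall mu, mu \in s -> nc mu <= rho'.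
  move=> mu /bigmax_ub; rewrite -/rho /rho' => h; lra.
pose toC := (fun x : R => (x%:C)%C).
pose X := \col_i x i.
have HC := Cayley_Hamilton (map_mx toC B).
rewrite Hs (monicP (char_poly_monic _)) scale1r in HC.
have Hw : horner_mx (map_mx toC B) (\prod_(mu <- s) ('X - mu%:P)) *m map_mx toC X = 0.
  by rewrite HC mul0mx.
have [C0 HC0] := MG rho'0 Hs' _ Hw j0.
have r0 : 0 <= r by lra.
have low : forall k i, r ^+ k * x i <= (B ^+ k *m X) i 0.
  elim=> [|k IH] i; first by rewrite expr0 mul1r mul1mx mxE.
  rewrite [B ^+ k.+1]exprS -mulmxE -mulmxA mxE.
  apply: le_trans (_ : r ^+ k * \sum_w B i w * x w <= _).
    by rewrite exprS -mulrA mulrCA; apply: ler_wpM2l => //; apply: exprn_ge0.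
  rewrite mulr_sumr; apply: ler_sum => w _; rewrite mulrCA.
  by apply: ler_wpM2l => //; exact: IH.
have up : forall k, r ^+ k * x j0 <= C0 * (k.+1%:R) ^+ size s * rho' ^+ k.
  move=> k; apply: le_trans (low k j0) _; apply: le_trans (HC0 k).
  rewrite -map_mxXn -map_mxM [X in nc X]mxE nc_real; exact: ler_norm.
have q1 : 1 < r / rho' by rewrite ltr_pdivlMr // mul1r.
have [D [D0 HD]] := @poly_le_exp R (size s).+1 _ q1.
pose M := D * C0 / x j0.
have M0 : 0 <= M.
  have := up 0%N; rewrite !expr0 mulr1 expr1n mulr1 mul1r => h.
  rewrite /M; apply: divr_ge0; last by apply: ltW.
  by apply: mulr_ge0 => //; lra.
have := archi_boundP M0; set k := Num.bound M => hk.
have h1 := HD k; have h2 := up k.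
set a := (k.+1%:R : R) in h1 h2; set P := a ^+ size s in h2.
have a0 : 0 < a by [].
have P0 : 0 < P by apply: exprn_gt0.
have t0 : 0 < rho' ^+ k by apply: exprn_gt0.
rewrite exprSr -/P expr_div_n in h1.
have : a * P * rho' ^+ k * x j0 <= D * C0 * P * rho' ^+ k.
  have e1 : a * P * rho' ^+ k <= D * r ^+ k.
    have E : D * r ^+ k = D * (r ^+ k / rho' ^+ k) * rho' ^+ k.
      by rewrite -mulrA divfK // expf_neq0 // lt0r_neq0.
    rewrite E [a * P]mulrC; apply: ler_wpM2r => //; exact: ltW.
  apply: le_trans (_ : D * r ^+ k * x j0 <= _).
    by apply: ler_wpM2r => //; apply: ltW.
  rewrite -mulrA; apply: le_trans (_ : D * (C0 * P * rho' ^+ k) <= _).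
    by apply: ler_wpM2l.
  by rewrite !mulrA.
have -> : D * C0 * P * rho' ^+ k = (M * x j0) * (P * rho' ^+ k).
  by rewrite /M divfK ?lt0r_neq0 // -!mulrA.
have -> : a * P * rho' ^+ k * x j0 = (a * x j0) * (P * rho' ^+ k) by ring.
rewrite ler_pM2r ?mulr_gt0 // ler_pM2r //.
have : a = (k%:R + 1) by rewrite /a -natr1.
lra.
Qed.

End MG.

Lemma char_poly_tr (F : comNzRingType) n (A : 'M[F]_n) : char_poly A^T = char_poly A.
Proof.
rewrite /char_poly -det_tr; congr (\det _); apply/matrixP => i j; rewrite !mxE eq_sym //.
Qed.

Lemma EV (R : realType) n (A : 'M[R]_n.+1) l : l \in eigenvalues_seq A ->
  exists v : 'I_n.+1 -> R[i], (exists j, v j != 0) /\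
    forall u, \sum_w ((A u w)%:C)%C * v w = l * v u.
Proof.
rewrite /eigenvalues_seq; case: closed_field_poly_normal => s /= Hs ls.
have : root (char_poly (map_mx (fun x : R => (x%:C)%C) A)) l.
  by rewrite Hs (monicP (char_poly_monic _)) scale1r root_prod_XsubC.
rewrite -char_poly_tr -eigenvalue_root_char => /eigenvalueP [v Hv vn0].
exists (fun j => v 0 j); split.
  apply/existsP; apply: contraNT vn0; rewrite negb_exists => /forallP H.
  by apply/eqP/matrixP => i j; rewrite (ord1 i) mxE; apply/eqP; have := H j; rewrite negbK.
move=> u; have := congr1 (fun M : 'rV_n.+1 => M 0 u) Hv; rewrite !mxE => <-.
by apply: eq_bigr => w _; rewrite !mxE mulrC.
Qed.


Section Main.
Variable R : realType.

Lemma AalphaE n (alpha : R) (H : rel 'I_n) u w :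
  Aalpha alpha H u w =
  alpha * ((u == w)%:R * (outdeg H u)%:R) + (1 - alpha) * (H u w)%:R.
Proof. by rewrite !mxE. Qed.

Lemma Aalpha_ge0 n (alpha : R) (H : rel 'I_n) u w : 0 <= alpha <= 1 ->
  0 <= Aalpha alpha H u w.
Proof.
move=> /andP [a0 a1]; rewrite AalphaE; apply: addr_ge0; apply: mulr_ge0 => //.
  by apply: mulr_ge0.
by rewrite subr_ge0.
Qed.

Lemma nc_sum n (F : 'I_n -> R[i]) : nc (\sum_w F w) <= \sum_w nc (F w).
Proof.
apply: (big_ind2 (fun a b => nc a <= b)).
- by rewrite ComplexField.Normc.normc0.
- by move=> a b c d h1 h2; apply: le_trans (le_normcD _ _) _; apply: lerD.
- by [].
Qed.

Lemma nc_gt0 (z : R[i]) : z != 0 -> 0 < nc z.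
Proof.
move=> zn; rewrite lt_def nc_ge0 andbT; apply: contra zn => /eqP h.
by apply/eqP; apply: ComplexField.Normc.eq0_normc.
Qed.

End Main.

Lemma main_succ (R : realType) (n m : nat) (alpha : R)
    (G : rel 'I_n.+1) (S : {set 'I_n.+1}) (root : 'I_n.+1 -> 'I_n.+1) :
  0 <= alpha < 1 ->
  irreflexive G ->
  in_Gnm m G S root ->
  rho_alpha alpha G <= rho_alpha alpha (star_digraph G S root).
Proof.
move=> /andP [a0 a1] irr HG.
have HG' := HG; case: HG' => _ _ [rS rfix] sconn [trees arcsG].
set G' := star_digraph G S root.
set A := Aalpha alpha G; set Bm := Aalpha alpha G'.
have a01 : 0 <= alpha <= 1 by rewrite a0 ltW.
have B0 i j : 0 <= Bm i j by apply: Aalpha_ge0.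
have A0 i j : 0 <= A i j by apply: Aalpha_ge0.
have G'SS u w : u \in S -> w \in S -> G' u w = G u w.
  by move=> uS wS; rewrite /G' /star_digraph /= uS wS /= orbF.
have G'uu u : G' u u = false.
  rewrite /G' /star_digraph /= irr andbF /=; case uS: (u \in S) => //=.
  by apply/negP => /eqP ur; move: uS; rewrite ur rS.
have F2 u : u \in S -> (outdeg G u <= outdeg G' u)%N.
  move=> uS; apply: subset_leq_card; apply/subsetP => w; rewrite !inE => guw.
  rewrite /G' /star_digraph /=; case wS: (w \in S); first by rewrite uS guw.
  rewrite orbC /=; case: (arcsG u w guw) => [[_ wS']|ruw]; first by move: wS; rewrite wS'.
  by rewrite -ruw (rfix u uS) eqxx.
have F3 u : u \notin S -> (outdeg G u <= outdeg G' (root u))%N.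
  move=> uS; set v := root u; set X := tree_class root v.
  have uX : u \in X by rewrite inE.
  have vX : v \in X by rewrite inE rfix ?rS.
  apply: (@leq_trans #|X :\ u|).
    apply: subset_leq_card; apply/subsetP => w; rewrite !inE => guw.
    have wu : w != u by apply/eqP => wu; move: guw; rewrite wu irr.
    rewrite wu /=.
    by case: (arcsG u w guw) => [[uS' _]|ruw]; [move: uS; rewrite uS' | rewrite -ruw].
  have e1 := cardsD1 u X; have e2 := cardsD1 v X; rewrite uX in e1; rewrite vX in e2.
  have -> : #|X :\ u| = #|X :\ v| by move: e1 e2; rewrite !add1n => -> [].
  apply: subset_leq_card; apply/subsetP => w; rewrite !inE => /andP [wv rw].
  rewrite /G' /star_digraph /=; apply/orP; right.
  rewrite eq_sym rw andbT; apply: contra wv => wS; rewrite -(eqP rw) rfix //.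
have F4 u w : u \in S -> w \in S -> A u w <= Bm u w.
  move=> uS wS; rewrite /A /Bm !AalphaE G'SS //; apply: lerD => //.
  apply: ler_wpM2l => //; apply: ler_wpM2l => //; rewrite ler_nat; exact: F2.
rewrite /rho_alpha /spectral_radius -/A -/Bm.
apply: bigmax_le; first exact: sr_ge0.
move=> l /EV [z [[j zj] Hz]].
case: (boolP [exists u, (u \notin S) && (l == ((alpha * (outdeg G u)%:R)%:C)%C)]).
  move=> /existsP [u /andP [uS /eqP ->]]; rewrite nc_real ger0_norm ?mulr_ge0 //.
  set v := root u.
  apply: le_trans (_ : Bm v v <= _).
    rewrite /Bm AalphaE eqxx mul1r; apply: le_trans (_ : alpha * (outdeg G' v)%:R <= _).
      by apply: ler_wpM2l => //; rewrite ler_nat; exact: F3.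
    by rewrite lerDl; apply: mulr_ge0 => //; rewrite subr_ge0 ltW.
  apply: (@K R n Bm (fun w => (w == v)%:R) _ v) => //.
  - by rewrite eqxx ltr0n.
  move=> u'; rewrite (bigD1 v) //= eqxx mulr1 big1 ?addr0; last first.
    by move=> w /negbTE ->; rewrite mulr0.
  by case: eqP => [->|_]; rewrite ?mulr1 ?mulr0.
rewrite negb_exists => /forallP noeig.
have Au u w : A u w = alpha * ((u == w)%:R * (outdeg G u)%:R) + (1 - alpha) * (G u w)%:R.
  exact: AalphaE.
have nz u : u \notin S -> z u != 0 -> exists2 w, G u w & z w != 0.
  move=> uS zu; case: (boolP [exists w, G u w && (z w != 0)]).
    by move=> /existsP [w /andP [guw zw]]; exists w.
  rewrite negb_exists => /forallP H0.
  have := Hz u; rewrite (bigD1 u) //= big1; last first.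
    move=> w wu; rewrite Au eq_sym (negbTE wu) /= mul0r mulr0 add0r.
    case guw: (G u w); last by rewrite mulr0 rmorph0 mul0r.
    by have := H0 w; rewrite guw /= negbK => /eqP ->; rewrite mulr0.
  rewrite addr0 Au eqxx irr mulr0 addr0 mul1r => e.
  have := noeig u; rewrite uS /=.
  have -> : (l == ((alpha * (outdeg G u)%:R)%:C)%C) = (l * z u == ((alpha * (outdeg G u)%:R)%:C)%C * z u).
    by rewrite (inj_eq (mulIf zu)).
  by rewrite e eqxx.
have reach : forall k u, (#|[set y | connect G u y]| <= k)%N -> u \notin S -> z u != 0 ->
    exists2 s, (s \in S) && (z s != 0) & connect G u s.
  elim=> [|k IH] u hk uS zu.
    by move: hk; rewrite leqn0 cards_eq0 => /eqP E; have := in_set0 u; rewrite -E inE connect0.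
  have [w guw zw] := nz u uS zu.
  case wS: (w \in S); first by exists w; rewrite ?wS ?zw //; apply: connect1.
  have wS' : w \notin S by rewrite wS.
  have pr : [set y | connect G w y] \proper [set y | connect G u y].
    apply/properP; split.
      apply/subsetP => y; rewrite !inE; apply: connect_trans; exact: connect1.
    exists u; rewrite !inE ?connect0 //.
    by apply/negP => cwu; exact: (@NC _ _ _ _ _ irr HG w u wS' guw cwu).
  have := proper_card pr => hlt.
  have hk' : (#|[set y | connect G w y]| <= k)%N by rewrite -ltnS; exact: leq_trans hlt hk.
  have [s hs cws] := IH w hk' wS' zw.
  by exists s => //; apply: connect_trans cws; apply: connect1.
have reach' u : u \notin S -> z u != 0 -> exists2 s, (s \in S) && (z s != 0) & connect G u s.
  by move=> uS zu; apply: (reach _ u (leqnn _) uS zu).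
have zero v w : v \in S -> w \notin S -> G v w -> z w = 0.
  move=> vS wS gvw; apply/eqP; apply/negP => /negP zw.
  have [s /andP [sS _] cws] := reach' w wS zw.
  have csv : connect G s v.
    have sr : subrel [rel a b | [&& a \in S, b \in S & G a b]] (connect G).
      by move=> a b /and3P [_ _ gab]; exact: connect1.
    exact: connect_sub sr _ _ (sconn s v sS vS).
  exact: (@NC _ _ _ _ _ irr HG w v wS gvw (connect_trans cws csv)).
have [s0 /andP [s0S zs0] _] : exists2 s, (s \in S) && (z s != 0) & connect G s s.
  case jS: (j \in S); first by exists j; rewrite ?jS ?zj ?connect0.
  have [s hs _] := reach' j (negbT jS) zj; by exists s; rewrite ?connect0.
pose x w := if w \in S then nc (z w) else 0.
apply: (@K R n Bm x _ s0) => //.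
- by move=> w; rewrite /x; case: ifP => _; rewrite ?nc_ge0.
- by rewrite /x s0S; apply: nc_gt0.
move=> u; rewrite /x; case uS: (u \in S); last first.
  rewrite mulr0; apply: sumr_ge0 => w _; apply: mulr_ge0 => //.
  by case: ifP => _; rewrite ?nc_ge0.
rewrite -ComplexField.Normc.normcM -Hz.
apply: le_trans (@nc_sum R _ _) _; apply: ler_sum => w _.
rewrite ComplexField.Normc.normcM nc_real ger0_norm //.
case wS: (w \in S).
  by apply: ler_wpM2r; [exact: nc_ge0 | exact: F4].
rewrite mulr0; case guw: (G u w).
  by rewrite (zero u w uS (negbT wS) guw) ComplexField.Normc.normc0 mulr0.
rewrite Au guw mulr0 addr0.
have -> : (u == w) = false by apply/negP => /eqP uw; move: wS; rewrite -uw uS.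
by rewrite mul0r mulr0 mul0r.
Qed.

Theorem theorem2p7 (R : realType) (n m : nat) (alpha : R)
    (G : rel 'I_n) (S : {set 'I_n}) (root : 'I_n -> 'I_n) :
  0 <= alpha < 1 ->
  irreflexive G ->
  in_Gnm m G S root ->
  rho_alpha alpha G <= rho_alpha alpha (star_digraph G S root).
Proof.
case: n G S root => [|n] G S root ha irr HG.
  exfalso; case: HG => /andP [m2 mn] _ _ _ _.
  by have := leq_trans m2 mn.
exact: (@main_succ R n m alpha G S root ha irr HG).
Qed.
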